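(* Let $C$ and $D$ be centrally symmetric convex bodies in $\mathbb{R}^d$, let $\alpha>0$, and let $C_+:=C+\alpha D$. Then for every set $U\subseteq D^\circ$, $$\mathcal{N}_{(C_+)^\circ}(U,\alpha)\lesssim_d\mathcal{N}_{C^\circ}(U,\alpha).$$
   Context: Polar $X^\circ=\{y:\langle w,y\rangle\le1\ \forall w\in X\}$. For a convex body $E$ with $O\in\operatorname{int}E$, $U\subseteq\mathbb{R}^d$ and $\alpha>0$, $\mathcal{N}_E(U,\alpha)$ is the minimum number $m$ of translates $x_1+\alpha E,\dots,x_m+\alpha E$ ($x_i\in\mathbb{R}^d$) whose union contains $U$. $X\lesssim_d Y$ means $X\le c^dY$ for a constant $c\ge1$ independent of $d$, $C$, $D$, $\alpha$, $U$. *)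

(* Defs.v *)
From HB Require Import structures.
From mathcomp Require Import all_boot all_order all_algebra.
From mathcomp Require Import all_classical all_reals all_analysis.
Set Implicit Arguments. Unset Strict Implicit. Unset Printing Implicit Defensive.
Import Order.TTheory GRing.Theory Num.Theory.
Import numFieldNormedType.Exports.
Local Open Scope classical_set_scope.
Local Open Scope ring_scope.

Definition dotv (R : realType) (d : nat) (u v : 'rV[R]_d) : R :=
  \sum_(i < d) u ord0 i * v ord0 i.

Definition convex_body (R : realType) (d : nat) (E : set 'rV[R]_d) : Prop :=
  [/\ compact E, convex_set (E : set (convex_lmodType 'rV[R]_d)) & (E°) !=set0].

Definition centrally_symmetric (R : realType) (d : nat) (E : set 'rV[R]_d) : Prop :=
  forall x, E x -> E (- x).

Definition polar (R : realType) (d : nat) (X : set 'rV[R]_d) : set 'rV[R]_d :=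
  [set y | forall w, X w -> dotv w y <= 1].

Definition mink_add (R : realType) (d : nat) (C D : set 'rV[R]_d) (a : R)
  : set 'rV[R]_d := [set x + a *: y | x in C & y in D].

Definition covered_by (R : realType) (d : nat) (E U : set 'rV[R]_d) (a : R)
  (m : nat) : Prop :=
  exists x : 'I_m -> 'rV[R]_d,
    U `<=` \bigcup_(i in [set: 'I_m]) [set x i + a *: e | e in E].

(* covering number N_E(U,a): minimum number of translates (+oo if none) *)
Definition covnum (R : realType) (d : nat) (E U : set 'rV[R]_d) (a : R)
  : \bar R := ereal_inf [set (m%:R)%:E | m in covered_by E U a].

(* Main.v *)
Require Import Defs.
From HB Require Import structures.
From mathcomp Require Import all_boot all_order all_algebra.
From mathcomp Require Import all_classical all_reals all_analysis.
From mathcomp Require Import ring lra zify.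
Import Order.TTheory GRing.Theory Num.Theory.
Local Open Scope classical_set_scope.
Local Open Scope ring_scope.

Module P1.


Section Scaled.
Variables (R : realType) (d : nat) (K : set 'rV[R]_d).
Hypothesis Kconv : forall x y (t : R), K x -> K y -> 0 <= t <= 1 ->
  K (t *: x + (1 - t) *: y).
Hypothesis Ksym : forall x, K x -> K (- x).
Hypothesis K0 : K 0.

Definition Ks (a : R) x := K (a^-1 *: x).

Lemma Ks_add (a b : R) (x y : 'rV[R]_d) : 0 < a -> 0 < b -> Ks a x -> Ks b y -> Ks (a + b) (x + y).
Proof.
rewrite /Ks => a0 b0 Hx Hy.
have ab0 : 0 < a + b by lra.
have -> : (a+b)^-1 *: (x + y) =
   (a/(a+b)) *: (a^-1 *: x) + (1 - a/(a+b)) *: (b^-1 *: y).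
  rewrite scalerDr !scalerA; congr (_ *: _ + _ *: _); field; lra.
apply: Kconv => //; apply/andP; split.
  by apply: divr_ge0; lra.
by rewrite ler_pdivrMr //; lra.
Qed.

Lemma Ks_opp (a : R) (x : 'rV[R]_d) : Ks a x -> Ks a (- x).
Proof. by rewrite /Ks scalerN; apply: Ksym. Qed.

Lemma Ks_le (a b : R) (x : 'rV[R]_d) : 0 < a -> a <= b -> Ks a x -> Ks b x.
Proof.
rewrite /Ks => a0 ab Hx.
have b0 : 0 < b by lra.
have -> : b^-1 *: x = (a/b) *: (a^-1 *: x) + (1 - a/b) *: 0.
  by rewrite scaler0 addr0 scalerA; congr (_ *: _); field; lra.
apply: Kconv => //; apply/andP; split.
  by apply: divr_ge0; lra.
by rewrite ler_pdivrMr //; lra.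
Qed.

Lemma Ks_Z (a c : R) (x : 'rV[R]_d) : 0 < a -> 0 < c -> Ks a x -> Ks (c * a) (c *: x).
Proof.
rewrite /Ks => a0 c0; rewrite scalerA.
have -> : (c * a)^-1 * c = a^-1 by field; lra.
by [].
Qed.

Lemma Ks1 x : Ks 1 x = K x.
Proof. by rewrite /Ks invr1 scale1r. Qed.

Variables (r Rb : R).
Hypothesis r0 : 0 < r.
Hypothesis Kcube : forall x : 'rV[R]_d, (forall i, `|x ord0 i| <= r) -> K x.
Hypothesis Kbd : forall x : 'rV[R]_d, K x -> forall i, `|x ord0 i| <= Rb.

Lemma Ks_bd a (x : 'rV[R]_d) i : 0 < a -> Ks a x -> `|x ord0 i| <= a * Rb.
Proof.
move=> a0 /Kbd /(_ i); rewrite mxE normrM gtr0_norm ?invr_gt0 //.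
by rewrite ler_pdivrMl.
Qed.

Lemma Ks_cube a (x : 'rV[R]_d) : 0 < a -> (forall i, `|x ord0 i| <= a * r) -> Ks a x.
Proof.
move=> a0 H; apply: Kcube => i; rewrite mxE normrM gtr0_norm ?invr_gt0 //.
by rewrite ler_pdivrMl.
Qed.

End Scaled.

End P1.
Import P1.

Module P2.


Section Box.
Variables (R : realType) (d : nat) (eps : R) (B : nat).
Hypothesis eps0 : 0 < eps.

Definition box := {ffun 'I_d -> 'I_(B.*2).+1}.
Definition pt (k : box) : 'rV[R]_d := \row_i (eps * ((k i)%:R - B%:R)).
Definition enc (x : 'rV[R]_d) : box :=
  [ffun i => inord `|(Num.floor (x ord0 i / eps) + B%:Z)%R|%N].

Lemma enc_spec (x : 'rV[R]_d) (i : 'I_d) : `|x ord0 i| <= B%:R * eps ->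
  pt (enc x) ord0 i = eps * (Num.floor (x ord0 i / eps))%:~R.
Proof.
move=> hx; rewrite /pt /enc mxE ffunE.
set z := Num.floor _.
have [hxl hxu] : - (B%:R * eps) <= x ord0 i /\ x ord0 i <= B%:R * eps.
  by move: hx; rewrite ler_norml => /andP.
have hzl : (- (B%:Z) <= z).
  rewrite floor_ge_int mulrNz ler_pdivlMr //.
  by rewrite mulNr -[_ *~ _]/(B%:R) .
have hzu : z <= B%:Z.
  rewrite -(ler_int R); apply: (le_trans (floor_le _)).
  by rewrite ler_pdivrMr //.
rewrite inordK; last by lia.
congr (_ * _).
have -> : ((`|(z + B%:Z)%R|%N)%:R : R) = (z + B%:Z)%:~R.
  have hn : ((`|(z + B%:Z)%R|%N)%:Z = z + B%:Z) by rewrite gez0_abs //; lia.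
  by rewrite pmulrn hn.
by rewrite intrD addrK.
Qed.

Lemma enc_round (x : 'rV[R]_d) (i : 'I_d) : `|x ord0 i| <= B%:R * eps ->
  0 <= x ord0 i - pt (enc x) ord0 i < eps.
Proof.
move=> hx; rewrite enc_spec //.
have /andP[h1 h2] := floor_itv (x ord0 i / eps).
move: h1 h2; rewrite intrD.
set w := (Num.floor _)%:~R => h1 h2.
have e1 : eps * w <= x ord0 i by rewrite mulrC -ler_pdivlMr.
have e2 : x ord0 i < eps * (w + 1) by rewrite mulrC -ltr_pdivrMr.
apply/andP; split; lra.
Qed.

Lemma enc_lattice (x : 'rV[R]_d) : (forall i, `|x ord0 i| <= B%:R * eps) ->
  (forall i, exists z : int, x ord0 i = eps * z%:~R) -> pt (enc x) = x.
Proof.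
move=> hb hl; apply/rowP => i; rewrite enc_spec //.
have [z ->] := hl i.
have -> : eps * z%:~R / eps = z%:~R.
  by rewrite [eps * _]mulrC mulfK // lt0r_neq0.
by rewrite intrKfloor.
Qed.

Lemma pt_inj : injective pt.
Proof.
move=> k k' /rowP H; apply/ffunP => i; apply/val_inj.
have := H i; rewrite !mxE => /mulfI => /(_ (lt0r_neq0 eps0)) /addIr /eqP.
by rewrite eqr_nat => /eqP.
Qed.

Lemma pt_lattice k (i : 'I_d) : exists z : int, pt k ord0 i = eps * z%:~R.
Proof.
by exists ((k i)%:Z - B%:Z); rewrite mxE intrB.
Qed.

End Box.

End P2.
Import P2.

Module P3.


Lemma aux_floor (R : realType) (a b Bn W : R) : W <= (a - Bn)/18 -> (a-Bn)/18 < W + 1 ->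
  W <= (b - Bn)/18 -> (b-Bn)/18 < W + 1 -> a < b + 18.
Proof. move=> *; lra. Qed.

Lemma aux_nat (a b : nat) : (a %% 18 = b %% 18)%N -> (a < b + 18)%N -> (b < a + 18)%N -> a = b.
Proof. move=> *; lia. Qed.

Section Pack.
Variables (R : realType) (d : nat) (K : set 'rV[R]_d).
Hypothesis Kconv : forall x y (t : R), K x -> K y -> 0 <= t <= 1 ->
  K (t *: x + (1 - t) *: y).
Hypothesis Ksym : forall x, K x -> K (- x).
Hypothesis K0 : K 0.
Variables (r Rb eps : R) (B : nat).
Hypothesis r0 : 0 < r.
Hypothesis Kcube : forall x : 'rV[R]_d, (forall i, `|x ord0 i| <= r) -> K x.
Hypothesis Kbd : forall x : 'rV[R]_d, K x -> forall i, `|x ord0 i| <= Rb.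
Hypothesis eps0 : 0 < eps.
Hypothesis epsr : 16 * eps <= r.
Hypothesis Bbig : 3 * Rb <= B%:R * eps.

Let KS := @Ks R d K.
Let Kadd (a b : R) (x y : 'rV[R]_d) : 0 < a -> 0 < b -> KS a x -> KS b y -> KS (a + b) (x + y) :=
  @Ks_add R d K Kconv a b x y.
Let Kopp (a : R) (x : 'rV[R]_d) : KS a x -> KS a (- x) := @Ks_opp R d K Ksym a x.
Let Kle (a b : R) (x : 'rV[R]_d) : 0 < a -> a <= b -> KS a x -> KS b x := @Ks_le R d K Kconv K0 a b x.
Let KZ (a c : R) (x : 'rV[R]_d) : 0 < a -> 0 < c -> KS a x -> KS (c * a) (c *: x) := @Ks_Z R d K a c x.
Let pt := @pt R d eps B.
Let enc := @enc R d eps B.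

Lemma box_range a (x : 'rV[R]_d) : 0 < a -> a <= 3 -> KS a x ->
  forall i, `|x ord0 i| <= B%:R * eps.
Proof.
move=> a0 a3 Hx i.
have h := @Ks_bd R d K Rb Kbd a x i a0 Hx.
have hR : 0 <= Rb := le_trans (normr_ge0 _) (Kbd _ K0 i).
apply: (le_trans h); apply: le_trans Bbig.
by apply: ler_wpM2r.
Qed.

Lemma small (u : 'rV[R]_d) : (forall i, 0 <= u ord0 i < eps) -> KS (1/16) u.
Proof.
move=> H; apply: (@Ks_cube R d K r Kcube) => // i.
have /andP[h1 h2] := H i.
have e' := epsr.
have hh : u ord0 i <= 1/16 * r by lra.
by rewrite ger0_norm.
Qed.

Lemma KS0 a : KS a 0.
Proof. by rewrite /KS /Ks scaler0. Qed.

Definition S a : {set box d B} := [set k | `[< KS a (pt k) >]].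

Lemma inS a k : (k \in S a) = `[< KS a (pt k) >].
Proof. by rewrite inE. Qed.

Lemma round_small a x : 0 < a -> a <= 3 -> KS a x -> KS (1/16) (x - pt (enc x)).
Proof.
move=> a0 a3 Hx; apply: small => i.
rewrite mxE mxE.
by apply: (@enc_round R d eps B eps0 x i); exact: (@box_range a x a0 a3 Hx i).
Qed.



Lemma KS_add3 (a b c e : R) (x y z : 'rV[R]_d) : 0 < a -> 0 < b -> 0 < c ->
  a + b + c <= e -> KS a x -> KS b y -> KS c z -> KS e (x + y + z).
Proof.
move=> a0 b0 c0 le Hx Hy Hz.
have ab0 : 0 < a + b by lra.
have abc0 : 0 < a + b + c by lra.
exact: (Kle _ _ _ abc0 le (Kadd _ _ _ _ ab0 c0 (Kadd _ _ _ _ a0 b0 Hx Hy) Hz)).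
Qed.

Lemma KS_add4 (a b c e g : R) (x y z w : 'rV[R]_d) : 0 < a -> 0 < b -> 0 < c ->
  0 < e -> a + b + (c + e) <= g -> KS a x -> KS b y -> KS c z -> KS e w ->
  KS g ((x + y) + (z + w)).
Proof.
move=> a0 b0 c0 e0 le Hx Hy Hz Hw.
have ab0 : 0 < a + b by lra.
have ce0 : 0 < c + e by lra.
have abc0 : 0 < a + b + (c + e) by lra.
exact: (Kle _ _ _ abc0 le (Kadd _ _ _ _ ab0 ce0 (Kadd _ _ _ _ a0 b0 Hx Hy)
  (Kadd _ _ _ _ c0 e0 Hz Hw))).
Qed.

Lemma stepI n (f : 'I_n -> 'rV[R]_d) :
  (forall i, KS 2 (f i)) -> (forall i j, i != j -> ~ KS (1/2) (f i - f j)) ->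
  (n * #|S (3/16)| <= #|S (9/4)|)%N.
Proof.
move=> Hf Hsep.
pose s i := pt (enc (f i)).
have h02 : (0:R) < 2 by lra.
have h23 : (2:R) <= 3 by lra.
have p16 : (0:R) < 1/16 by lra.
have p316 : (0:R) < 3/16 by lra.
have Hu i : KS (1/16) (f i - s i) := @round_small 2 (f i) h02 h23 (Hf i).
have HS t : t \in S (3/16) -> KS (3/16) (pt t) by rewrite inS => /asboolP.
have Hsum i t : t \in S (3/16) -> KS (9/4) (s i + pt t).
  move=> /HS Ht.
  have -> : s i + pt t = f i + (- (f i - s i)) + pt t.
    by apply/rowP => j; rewrite !mxE; lra.
  apply: (@KS_add3 2 (1/16) (3/16)); try lra.
    exact: Hf.
    exact: Kopp.
  exact: Ht.
have Hpt i t : t \in S (3/16) -> pt (enc (s i + pt t)) = s i + pt t.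
  move=> Ht; apply: (@enc_lattice R d eps B eps0).
    have h94 : (0:R) < 9/4 by lra.
    have h943 : (9/4:R) <= 3 by lra.
    exact: (@box_range (9/4) _ h94 h943 (Hsum i t Ht)).
  move=> j; have [z1 e1] := @pt_lattice R d eps B (enc (f i)) j.
  have [z2 e2] := @pt_lattice R d eps B t j.
  exists (z1 + z2); rewrite mxE /s /pt e1 e2 intrD; lra.
pose F (p : 'I_n * box d B) := enc (s p.1 + pt p.2).
have inj : {in finset.setX [set: 'I_n]%SET (S (3/16)) &, injective F}.
  move=> [i t] [j t'] /setXP [_ Ht] /setXP [_ Ht'] E.
  have E2 : s i + pt t = s j + pt t'.
    by rewrite -(Hpt i t Ht) -(Hpt j t' Ht'); congr pt; exact: E.
  case: (eqVneq i j) => [eij|nij].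
    subst j; have := addrI _ E2 => /(@pt_inj R d eps B eps0) ->; done.
  exfalso; apply: (Hsep i j nij).
  have -> : f i - f j = ((f i - s i) + - (f j - s j)) + (pt t' + - pt t).
    apply/rowP => k; have := congr1 (fun M : 'rV[R]_d => M ord0 k) E2.
    by rewrite /= !mxE => e; lra.
  apply: (@KS_add4 (1/16) (1/16) (3/16) (3/16)); try lra.
  - exact: Hu.
  - exact: Kopp.
  - exact: HS.
  - by apply: Kopp; exact: HS.
have sub : (F @: finset.setX [set: 'I_n] (S (3/16)) \subset S (9/4))%SET.
  apply/fintype.subsetP => y /imsetP [[i t] /setXP [_ Ht] ->].
  rewrite inS; apply/asboolP; rewrite /F /= Hpt //; exact: Hsum.
have := subset_leq_card sub.
by rewrite card_in_imset // cardsX cardsT card_ord.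
Qed.

Lemma stepII : (#|S (9/4)| <= 18 ^ d * #|S (3/16)|)%N.
Proof.
pose G (k : box d B) : box d B * {ffun 'I_d -> 'I_18} :=
  (enc (18^-1 *: pt k), [ffun i => inord (k i %% 18)]).
have HS94 k : k \in S (9/4) -> KS (9/4) (pt k) by rewrite inS => /asboolP.
have h94 : (0:R) < 9/4 by lra.
have h18 : (0:R) < 18^-1 by rewrite invr_gt0; lra.
have Hy k : k \in S (9/4) -> KS (1/8) (18^-1 *: pt k).
  move=> /HS94 H; have := KZ _ _ _ h94 h18 H.
  have -> : (18^-1 * (9/4) : R) = 1/8 by field.
  done.
have p18 : (0:R) < 1/8 by lra.
have p183 : (1/8:R) <= 3 by lra.
have Hr k i : k \in S (9/4) -> `|(18^-1 *: pt k) ord0 i| <= B%:R * eps.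
  by move=> /Hy H; exact: (@box_range (1/8) _ p18 p183 H).
have sub : (G @: S (9/4) \subset finset.setX (S (3/16)) [set: {ffun 'I_d -> 'I_18}])%SET.
  apply/fintype.subsetP => y /imsetP [k Hk ->].
  apply/setXP; split; last by rewrite !inE.
  rewrite inS; apply/asboolP.
  have Hu := @round_small (1/8) _ p18 p183 (Hy k Hk).
  have -> : pt (enc (18^-1 *: pt k)) = 18^-1 *: pt k + - (18^-1 *: pt k - pt (enc (18^-1 *: pt k))).
    by rewrite opprB addrC subrK.
  have Hz : KS 0 0 -> True by [].
  have q1 : (0:R) < 1/8 + 1/16 by lra.
  have q2 : (1/8 + 1/16 : R) <= 3/16 by lra.
  have p16 : (0:R) < 1/16 by lra.
  exact: (Kle _ _ _ q1 q2 (Kadd _ _ _ _ p18 p16 (Hy k Hk) (Kopp _ _ Hu))).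
have inj : {in S (9/4) &, injective G}.
  move=> k k' Hk Hk' [E1 E2].
  apply/ffunP => i; apply/val_inj.
  have fl : Num.floor ((18^-1 *: pt k) ord0 i / eps) =
            Num.floor ((18^-1 *: pt k') ord0 i / eps).
    have := congr1 (fun q => pt q ord0 i) E1.
    rewrite /= /pt (@enc_spec R d eps B eps0 _ i (Hr k i Hk)).
    rewrite (@enc_spec R d eps B eps0 _ i (Hr k' i Hk')).
    move/(mulfI (lt0r_neq0 eps0))/eqP; rewrite eqr_int => /eqP; done.
  have md : (k i %% 18 = k' i %% 18)%N.
    have := congr1 (fun g : {ffun 'I_d -> 'I_18} => val (g i)) E2.
    by rewrite /= !ffunE !inordK // ltn_pmod.
  have ey (q : box d B) : (18^-1 *: pt q) ord0 i / eps = ((q i)%:R - B%:R) / 18.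
    rewrite /pt /P2.pt !mxE; by field; exact: lt0r_neq0.
  move: fl; rewrite !ey.
  move: (floor_itv (((k i)%:R - B%:R) / 18 : R)) (floor_itv (((k' i)%:R - B%:R) / 18 : R)).
  move=> /andP[a1 a2] /andP[b1 b2] fl.
  rewrite fl in a1 a2; move: a1 a2 b1 b2; rewrite intrD !mulr1z.
  set W := (Num.floor _)%:~R => a1 a2 b1 b2.
  have c1 : ((k i)%:R : R) < (k' i + 18)%:R.
    by rewrite natrD; exact: (@aux_floor R _ _ _ _ a1 a2 b1 b2).
  have c2 : ((k' i)%:R : R) < (k i + 18)%:R.
    by rewrite natrD; exact: (@aux_floor R _ _ _ _ b1 b2 a1 a2).
  move: c1 c2; rewrite !ltr_nat => c1 c2.
  exact: aux_nat.
have := subset_leq_card sub.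
rewrite card_in_imset // cardsX cardsT card_ffun !card_ord mulnC.
done.
Qed.

Lemma stepIII : (0 < #|S (3/16)|)%N.
Proof.
apply/card_gt0P; exists (enc 0); rewrite inS; apply/asboolP.
have e0 : pt (enc 0) = 0.
  apply: (@enc_lattice R d eps B eps0 0).
    move=> i; rewrite mxE normr0; apply: mulr_ge0 => //; exact: ltW.
  by move=> i; exists 0; rewrite mxE mulr0.
rewrite e0; exact: KS0.
Qed.

Lemma packing n (f : 'I_n -> 'rV[R]_d) :
  (forall i, KS 2 (f i)) -> (forall i j, i != j -> ~ KS (1/2) (f i - f j)) ->
  (n <= 18 ^ d)%N.
Proof.
move=> Hf Hsep.
have h1 := @stepI n f Hf Hsep.
have h2 := stepII.
have h3 := stepIII.
by rewrite -(leq_pmul2r h3); apply: leq_trans h1 h2.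
Qed.

End Pack.

End P3.
Import P3.

Module P4.


Section Cover.
Variables (R : realType) (d : nat) (K : set 'rV[R]_d).
Hypothesis Kconv : forall x y (t : R), K x -> K y -> 0 <= t <= 1 ->
  K (t *: x + (1 - t) *: y).
Hypothesis Ksym : forall x, K x -> K (- x).
Hypothesis K0 : K 0.
Variables (r Rb : R).
Hypothesis r0 : 0 < r.
Hypothesis Kcube : forall x : 'rV[R]_d, (forall i, `|x ord0 i| <= r) -> K x.
Hypothesis Kbd : forall x : 'rV[R]_d, K x -> forall i, `|x ord0 i| <= Rb.

Let KS := @Ks R d K.

Definition Psep n := exists f : 'I_n -> 'rV[R]_d,
  (forall i, KS 2 (f i)) /\ (forall i j, i != j -> ~ KS (1/2) (f i - f j)).

Lemma Psep_bound n : Psep n -> (n <= 18 ^ d)%N.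
Proof.
move=> [f [Hf Hs]].
have r0' := r0.
pose eps := r / 16.
have eps0 : 0 < eps by rewrite /eps; lra.
have epsr : 16 * eps <= r by rewrite /eps; lra.
pose x := `|3 * Rb / eps|.
have x0 : 0 <= x := normr_ge0 _.
pose B := Num.Def.archi_bound x.
have hB : x < B%:R := archi_boundP x0.
have Bbig : 3 * Rb <= B%:R * eps.
  rewrite -ler_pdivrMr //; apply: (le_trans (ler_norm _)); exact: ltW.
exact: (@packing R d K Kconv Ksym K0 r Rb eps B Kcube Kbd eps0 epsr Bbig n f Hf Hs).
Qed.

Lemma covering : exists M, (M <= 18 ^ d)%N /\ exists z : 'I_M -> 'rV[R]_d,
  forall y, KS 2 y -> exists j, KS (1/2) (y - z j).
Proof.
pose P := fun n => `[< Psep n >].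
have exP : exists n, P n.
  exists 0%N; apply/asboolP; exists (fun _ => 0); split; by case.
have ubP : forall n, P n -> (n <= 18 ^ d)%N.
  by move=> n /asboolP; apply: Psep_bound.
case: (ex_maxnP exP ubP) => n /asboolP [f [Hf Hs]] maxn.
exists n; split; first by apply: ubP; apply/asboolP; exists f.
exists f => y Hy.
apply: contrapT => Hno.
pose g (i : 'I_n.+1) := if unlift ord_max i is Some j then f j else y.
have gl j : g (lift ord_max j) = f j by rewrite /g liftK.
have gm : g ord_max = y by rewrite /g unlift_none.
have : P n.+1.
  apply/asboolP; exists g; split.
    by move=> i; case: (unliftP ord_max i) => [j|] ->; rewrite ?gl ?gm.
  move=> i j; case: (unliftP ord_max i) => [i'|] ->; case: (unliftP ord_max j) => [j'|] ->.
  - rewrite !gl => nij; apply: Hs; apply: contraNneq nij => ->; done.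
  - rewrite gl gm => _ H; apply: Hno; exists i'.
    have := @Ks_opp R d K Ksym _ _ H; by rewrite opprB.
  - rewrite gl gm => _ H; apply: Hno; exists j'; exact: H.
  - by rewrite eqxx.
by move/maxn; rewrite ltnn.
Qed.

End Cover.

End P4.
Import P4.

Import numFieldNormedType.Exports.

Module P5.


Section Dot.
Variables (R : realType) (d : nat).
Implicit Types (w x y : 'rV[R]_d).

Lemma dotvDr w x y : dotv w (x + y) = dotv w x + dotv w y.
Proof. by rewrite /dotv -big_split; apply: eq_bigr => i _; rewrite mxE mulrDr. Qed.
Lemma dotvDl w x y : dotv (x + y) w = dotv x w + dotv y w.
Proof. by rewrite /dotv -big_split; apply: eq_bigr => i _; rewrite mxE mulrDl. Qed.
Lemma dotvZr w (a : R) x : dotv w (a *: x) = a * dotv w x.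
Proof. by rewrite /dotv mulr_sumr; apply: eq_bigr => i _; rewrite mxE mulrCA. Qed.
Lemma dotvZl w (a : R) x : dotv (a *: x) w = a * dotv x w.
Proof. by rewrite /dotv mulr_sumr; apply: eq_bigr => i _; rewrite mxE mulrA. Qed.
Lemma dotvNr w x : dotv w (- x) = - dotv w x.
Proof. by rewrite /dotv -sumrN; apply: eq_bigr => i _; rewrite mxE mulrN. Qed.
Lemma dotvNl w x : dotv (- x) w = - dotv x w.
Proof. by rewrite /dotv -sumrN; apply: eq_bigr => i _; rewrite mxE mulNr. Qed.
Lemma dotv0r w : dotv w 0 = 0.
Proof. by rewrite /dotv big1 // => i _; rewrite mxE mulr0. Qed.

Lemma dotv_bound w y (a b : R) : (forall i, `|w ord0 i| <= a) ->
  (forall i, `|y ord0 i| <= b) -> dotv w y <= d%:R * (a * b).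
Proof.
move=> Hw Hy; rewrite /dotv.
apply: (le_trans (ler_norm _)); apply: (le_trans (ler_norm_sum _ _ _)).
have -> : d%:R * (a * b) = \sum_(i < d) (a * b).
  by rewrite sumr_const card_ord mulr_natl.
apply: ler_sum => i _; rewrite normrM.
apply: ler_pM => //; exact: normr_ge0.
Qed.

Lemma polar_conv (X : set 'rV[R]_d) x y (t : R) :
  polar X x -> polar X y -> 0 <= t <= 1 -> polar X (t *: x + (1 - t) *: y).
Proof.
move=> Hx Hy /andP[t0 t1] w Xw.
rewrite dotvDr !dotvZr.
have h1 := Hx w Xw; have h2 := Hy w Xw.
have e1 : t * dotv w x <= t * 1 by apply: ler_wpM2l.
have e2 : (1 - t) * dotv w y <= (1 - t) * 1 by apply: ler_wpM2l; lra.
lra.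
Qed.

Lemma polar_sym (X : set 'rV[R]_d) x : centrally_symmetric X ->
  polar X x -> polar X (- x).
Proof.
move=> HX Hx w Xw; rewrite dotvNr -dotvNl; exact: Hx (HX _ Xw).
Qed.

Lemma polar0 (X : set 'rV[R]_d) : polar X 0.
Proof. by move=> w _; rewrite dotv0r. Qed.

End Dot.

Lemma mx_norm_entry (R : realType) d (x : 'rV[R]_d) i : `|x ord0 i| <= `|x|.
Proof. rewrite [X in _ <= X]mx_normrE. exact: (le_bigmax _ _ (ord0, i)). Qed.

Lemma conv_of (R : realType) d (A : set 'rV[R]_d) :
  convex_set (A : set (convex_lmodType 'rV[R]_d)) ->
  forall x y (t : R), 0 <= t <= 1 -> A x -> A y -> A (t *: x + (1 - t) *: y).
Proof.
move=> HA x y t ht Ax Ay.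
have ht' : Itv.spec (@Itv.num_sem R) (Itv.Real `[0%Z, 1%Z]) t.
  by rewrite /Itv.spec /Itv.num_sem /= num_real in_itv /= mulr0z mulr1z.
pose l : {i01 R} := Itv.mk ht'.
have := HA x y l; rewrite !inE => /(_ Ax Ay).
by rewrite /conv /=.
Qed.

Lemma compact_cube (R : realType) d (C : set 'rV[R]_d) : compact C ->
  exists Rc : R, 0 < Rc /\ forall x, C x -> forall i, `|x ord0 i| <= Rc.
Proof.
move=> /compact_bounded [M [_ HM]].
have hM : M < `|M| + 1 by apply: (le_lt_trans (ler_norm M)); lra.
have := HM _ hM => /= HC.
exists (`|M| + 1); split; first by have := normr_ge0 M; lra.
move=> x Cx i; exact: (le_trans (@mx_norm_entry R d x i) (HC x Cx)).
Qed.

Lemma interior_cube (R : realType) d (D : set 'rV[R]_d) : convex_body D ->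
  centrally_symmetric D ->
  exists rho : R, 0 < rho /\ forall y : 'rV[R]_d, (forall i, `|y ord0 i| <= rho) -> D y.
Proof.
move=> [_ Dconv [x0 Hx0]] Ds.
have := Hx0; rewrite /interior /= => /nbhs_ballP [e e0 He].
exists (e / 2); split; first by apply: divr_gt0.
move=> y Hy.
have Hb : forall z : 'rV[R]_d, (forall i, `|z ord0 i| <= e / 2) -> D (x0 + z).
  move=> z Hz; apply: He; split => // a j.
  have -> : a = ord0 by rewrite (ord1 a); apply/val_inj.
  rewrite -ball_normE /ball_ /= !mxE opprD addrA subrr add0r normrN.
  have e0' : 0 < e := e0.
  have := Hz j; lra.
have Hy' : forall i, `|(- y) ord0 i| <= e / 2 by move=> i; rewrite mxE normrN.
have ht : 0 <= (1/2 : R) <= 1 by apply/andP; split; lra.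
have := @conv_of R d D Dconv _ _ (1/2) ht (Hb _ Hy) (Ds _ (Hb _ Hy')).
have -> : (1/2 : R) *: (x0 + y) + (1 - 1/2) *: - (x0 + - y) = y.
  by apply/rowP => k; rewrite !mxE; lra.
by [].
Qed.

End P5.
Import P5.

Module P6.


Definition Kof (R : realType) d (C D : set 'rV[R]_d) (alpha : R) : set 'rV[R]_d :=
  fun y => polar C (alpha^-1 *: y) /\ polar D y.

Section KofProps.
Variables (R : realType) (d : nat) (C D : set 'rV[R]_d) (alpha : R).
Hypothesis a0 : 0 < alpha.
Hypothesis Cb : convex_body C.
Hypothesis Cs : centrally_symmetric C.
Hypothesis Db : convex_body D.
Hypothesis Ds : centrally_symmetric D.

Let K := @Kof R d C D alpha.

Lemma Kof_conv x y (t : R) : K x -> K y -> 0 <= t <= 1 ->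
  K (t *: x + (1 - t) *: y).
Proof.
move=> [Cx Dx] [Cy Dy] ht; split; last exact: polar_conv.
rewrite scalerDr !scalerA [alpha^-1 * t]mulrC [alpha^-1 * (1 - t)]mulrC -!scalerA.
exact: polar_conv.
Qed.

Lemma Kof_sym x : K x -> K (- x).
Proof.
move=> [Cx Dx]; split; last exact: polar_sym.
by rewrite scalerN; exact: polar_sym.
Qed.

Lemma Kof0 : K 0.
Proof. by split; rewrite ?scaler0; exact: polar0. Qed.

Lemma Kof_cube : exists r : R, 0 < r /\
  forall x : 'rV[R]_d, (forall i, `|x ord0 i| <= r) -> K x.
Proof.
have [RC [RC0 HC]] := @compact_cube R d C (let: And3 c _ _ := Cb in c).
have [RD [RD0 HD]] := @compact_cube R d D (let: And3 c _ _ := Db in c).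
have a0' := a0.
pose Q := d%:R * (RC / alpha + RD) + 1.
have dge0 : (0 : R) <= d%:R := ler0n _ _.
have q1 : 0 <= d%:R * (RC / alpha) by apply: mulr_ge0 => //; apply: divr_ge0; lra.
have q2 : 0 <= d%:R * RD by apply: mulr_ge0 => //; lra.
have Q0 : 0 < Q by rewrite /Q mulrDr; lra.
exists (1 / Q); split; first by apply: divr_gt0 => //; lra.
move=> x Hx; split.
- move=> w Cw.
  apply: (le_trans (@dotv_bound R d w _ RC (1 / Q / alpha) (HC _ Cw) _)).
    move=> i; rewrite mxE normrM gtr0_norm ?invr_gt0 // mulrC ler_pdivlMr //.
    by rewrite divfK ?lt0r_neq0 //; exact: Hx.
  have -> : d%:R * (RC * (1 / Q / alpha)) = (d%:R * (RC / alpha)) / Q.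
    by field; apply/andP; split; apply: lt0r_neq0.
  rewrite ler_pdivrMr // mul1r /Q mulrDr; lra.
- move=> w Dw.
  apply: (le_trans (@dotv_bound R d w _ RD (1 / Q) (HD _ Dw) Hx)).
  have -> : d%:R * (RD * (1 / Q)) = (d%:R * RD) / Q.
    by field; apply: lt0r_neq0.
  rewrite ler_pdivrMr // mul1r /Q mulrDr; lra.
Qed.

Lemma dotv_delta (i : 'I_d) (y : 'rV[R]_d) : dotv (delta_mx ord0 i) y = y ord0 i.
Proof.
rewrite /dotv (bigD1 i) //= big1 ?addr0.
  by rewrite mxE !eqxx mul1r.
by move=> j ji; rewrite mxE eqxx /= (negbTE ji) mul0r.
Qed.

Lemma Kof_bd : exists Rb : R, forall x : 'rV[R]_d, K x -> forall i, `|x ord0 i| <= Rb.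
Proof.
have [rho [rho0 Hrho]] := @interior_cube R d D Db Ds.
exists (1 / rho) => x [_ Dx] i.
have Hw : D (rho *: delta_mx ord0 i).
  apply: Hrho => j; rewrite !mxE eqxx /=.
  case: (j == i); rewrite /= ?mulr1 ?mulr0 ?normr0 ?gtr0_norm //; exact: ltW.
have h1 := Dx _ Hw.
have h2 := Dx _ (Ds _ Hw).
move: h1 h2; rewrite dotvNl !dotvZl !dotv_delta => h1 h2.
rewrite ler_norml; apply/andP; split.
  rewrite -(ler_pM2l rho0) mulrN; have -> : rho * (1 / rho) = 1.
    by field; apply: lt0r_neq0.
  lra.
rewrite -(ler_pM2l rho0); have -> : rho * (1 / rho) = 1.
  by field; apply: lt0r_neq0.
done.
Qed.

End KofProps.

End P6.
Import P6.

Module P7.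


Section Main.
Variables (R : realType) (d : nat) (C D : set 'rV[R]_d) (alpha : R).
Hypothesis a0 : 0 < alpha.
Hypothesis Cs : centrally_symmetric C.
Hypothesis Ds : centrally_symmetric D.

Let K := @Kof R d C D alpha.
Let KS := @Ks R d K.

Lemma half_polar v : KS (1/2) v -> polar (mink_add C D alpha) (alpha^-1 *: v).
Proof.
rewrite /KS /Ks /K /Kof => -[HC HD] w [c Cc [e De <-]].
have h1 := HC c Cc; have h2 := HD e De.
move: h1 h2; rewrite dotvDl dotvZl !dotvZr.
have -> : (1 / 2 : R)^-1 = 2 by rewrite div1r invrK.
set a := dotv c v; set b := dotv e v.
have -> : alpha * (alpha^-1 * b) = b by rewrite mulVKf // lt0r_neq0.
rewrite mulrCA.
set q := alpha^-1 * a => h1 h2.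
lra.
Qed.

Lemma cover_mult M (z : 'I_M -> 'rV[R]_d) :
  (forall y, KS 2 y -> exists j, KS (1/2) (y - z j)) ->
  forall U m, U `<=` polar D -> Defs.covered_by (polar C) U alpha m ->
  Defs.covered_by (polar (mink_add C D alpha)) U alpha (m * M).
Proof.
move=> Hz U m HU [x Hx].
have [p Hp] : exists p : 'I_m -> 'rV[R]_d, forall i y, U y ->
    [set x i + alpha *: e | e in polar C] y ->
    U (p i) /\ [set x i + alpha *: e | e in polar C] (p i).
  suff Hc : forall i, exists q, forall y, U y ->
    [set x i + alpha *: e | e in polar C] y ->
    U q /\ [set x i + alpha *: e | e in polar C] q.
    by have [p Hp] := choice Hc; exists p.
  move=> i.
  case: (pselect (exists y, U y /\ [set x i + alpha *: e | e in polar C] y)).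
    by move=> [y [Uy Py]]; exists y.
  by move=> no; exists 0 => y Uy Py; exfalso; apply: no; exists y.
pose A : 'M['rV[R]_d]_(m, M) := \matrix_(i < m, j < M) (p i + z j).
exists (fun k => mxvec A 0 k) => y Uy.
have [i _ Pi] := Hx y Uy.
have [Up Pp] := Hp i y Uy Pi.
have H2 : KS 2 (y - p i).
  rewrite /KS /Ks /K /Kof; split.
    move: Pi Pp => [e Ce Ee] [e' Ce' Ee'].
    have -> : alpha^-1 *: (2^-1 *: (y - p i)) = (1/2) *: e + (1 - 1/2) *: (- e').
      rewrite -Ee -Ee'; apply/rowP => k; rewrite !mxE.
      by field; apply: lt0r_neq0.
    apply: polar_conv => //; first exact: polar_sym.
    by apply/andP; split; lra.
  have -> : 2^-1 *: (y - p i) = (1/2) *: y + (1 - 1/2) *: (- p i).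
    by apply/rowP => k; rewrite !mxE; lra.
  apply: polar_conv; [exact: HU | exact/polar_sym/HU |].
  by apply/andP; split; lra.
have [j Hj] := Hz _ H2.
exists (mxvec_index i j) => //.
rewrite mxvecE mxE.
exists (alpha^-1 *: (y - p i - z j)); first exact: half_polar.
rewrite scalerA mulfV ?lt0r_neq0 // scale1r.
by apply/rowP => k; rewrite !mxE; lra.
Qed.

End Main.

Lemma covnum_le (R : realType) d (E1 E2 U : set 'rV[R]_d) (a : R) (c : nat) :
  (0 < c)%N ->
  (forall m, Defs.covered_by E2 U a m -> exists m', Defs.covered_by E1 U a m' /\ (m' <= c * m)%N) ->
  (covnum E1 U a <= (c%:R)%:E * covnum E2 U a)%E.
Proof.
move=> c0 H.
case: (pselect (exists m, Defs.covered_by E2 U a m)) => [ex|no].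
  pose P := fun m => `[< Defs.covered_by E2 U a m >].
  have exP : exists m, P m by case: ex => m hm; exists m; apply/asboolP.
  case: (ex_minnP exP) => m0 /asboolP Hm0 minm.
  have e2 : covnum E2 U a = (m0%:R)%:E.
    apply/le_anti/andP; split.
      by apply: ge_ereal_inf; exists (m0%:R)%:E => //; exists m0.
    apply/ereal_infP => _ [m hm <-]; rewrite lee_fin ler_nat; apply: minm.
    exact/asboolP.
  rewrite e2.
  have [m' [hm' le]] := H m0 Hm0.
  apply: (@le_trans _ _ ((m'%:R)%:E)).
    by apply: ge_ereal_inf; exists (m'%:R)%:E => //; exists m'.
  by rewrite -EFinM lee_fin -natrM ler_nat.
have -> : covnum E2 U a = +oo%E.
  rewrite /covnum.
  have -> : Defs.covered_by E2 U a = set0.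
    by apply/seteqP; split => // m hm; apply: no; exists m.
  rewrite image_set0.
  exact: ereal_inf0.
by rewrite gt0_muley ?leey // lte_fin ltr0n.
Qed.

End P7.
Import P7.


Theorem lemma4p3 :
  exists c : nat, (1 <= c)%N /\
  forall (R : realType) (d : nat) (C D : set 'rV[R]_d) (alpha : R),
    convex_body C -> centrally_symmetric C ->
    convex_body D -> centrally_symmetric D ->
    0 < alpha ->
    forall U : set 'rV[R]_d, U `<=` polar D ->
    (covnum (polar (mink_add C D alpha)) U alpha
       <= ((c ^ d)%:R)%:E * covnum (polar C) U alpha)%E.
Proof.
exists 18%N; split => //.
move=> R d C D alpha Cb Cs Db Ds a0 U HU.
have [r [r0 Kcube]] := @Kof_cube R d C D alpha a0 Cb Db.
have [Rb Kbd] := @Kof_bd R d C D alpha Db Ds.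
have [M [HM [z Hz]]] := @covering R d (@Kof R d C D alpha)
  (@Kof_conv R d C D alpha) (@Kof_sym R d C D alpha Cs Ds) (@Kof0 R d C D alpha)
  r Rb r0 Kcube Kbd.
apply: covnum_le; first by rewrite expn_gt0.
move=> m hm; exists (m * M)%N; split.
  exact: (@cover_mult R d C D alpha a0 Cs Ds M z Hz U m HU hm).
by rewrite mulnC leq_mul2r HM orbT.
Qed.
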